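(* Let $\Omega$ be a nonempty set, $\succeq$ a regular stochastic order on $\mathfrak F(\Omega)$ and $\Gamma\subset\mathfrak F(\Omega)$ a convex cone. There is no $f\in\Gamma$ with $f\succeq1$ if and only if there exists $m\in\mathbb P_\succeq=\{\mu\in\mathbb P:\mu(N)=0\text{ whenever }0\succeq1_N\}$ such that $$\Gamma_\succeq=\{f\in\Gamma:f\succeq a\text{ for some }a\in\mathbb R\}\subset L^1(m)\quad\text{and}\quad\sup_{f\in\Gamma_\succeq}\int f\,dm\le0 .$$
   Context: $\mathfrak F(\Omega)$ is the set of real-valued functions on $\Omega$; inequalities are pointwise and constants are constant functions. A regular stochastic order is a reflexive, transitive binary relation $\succeq$ on $\mathfrak F(\Omega)$ such that: (TRIV) $0\not\succeq1$; (CONE) $f_i\succeq g_i$ and $a_i\ge0$ ($i=1,2$) imply $a_1f_1+a_2f_2\succeq a_1g_1+a_2g_2$; (CERT) $f\ge0$ implies $f\succeq0$; (APPR) $f+2^{-n}\succeq0$ for all $n$ implies $f\succeq0$; (REST) $f\succeq0$, $A\subset\Omega$ imply $f1_A\succeq0$. $\mathbb P$ is the set of finitely additive probabilities on all subsets of $\Omega$. For $\mu$ bounded finitely additive, $\int f\,d\mu:=\lim_n\int[(f^+\wedge n)-(f^-\wedge n)]d\mu$ if the limit exists in $[-\infty,\infty]$, else $\infty$; $L^1(m)$ denotes the $m$-integrable functions (Dunford–Schwartz). *)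

(* Defs.v *)
From HB Require Import structures.
From mathcomp Require Import all_boot all_order all_algebra.
From mathcomp Require Import all_classical all_reals all_analysis.
Set Implicit Arguments. Unset Strict Implicit. Unset Printing Implicit Defensive.
Import Order.TTheory GRing.Theory Num.Theory.
Import numFieldNormedType.Exports.
Local Open Scope classical_set_scope.
Local Open Scope ring_scope.

Section Defs.
Variables (R : realType) (Omega : Type).

Definition regular_stochastic_order (ge : (Omega -> R) -> (Omega -> R) -> Prop) :=
  [/\ (forall f, ge f f),
      (forall f g h, ge f g -> ge g h -> ge f h),
      ~ ge (cst 0) (cst 1) &
   [/\
      (forall f1 f2 g1 g2 (a1 a2 : R), ge f1 g1 -> ge f2 g2 ->
          0 <= a1 -> 0 <= a2 ->
          ge (fun x => a1 * f1 x + a2 * f2 x) (fun x => a1 * g1 x + a2 * g2 x)),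
      (forall f, (forall x, 0 <= f x) -> ge f (cst 0)),
      (forall f, (forall n : nat, ge (fun x => f x + 2%:R ^- n) (cst 0)) ->
          ge f (cst 0)) &
      (forall f (A : set Omega), ge f (cst 0) -> ge (f \* \1_A) (cst 0))]].

Definition convex_cone (G : set (Omega -> R)) :=
  forall f g (a b : R), G f -> G g -> 0 <= a -> 0 <= b ->
    G (fun x => a * f x + b * g x).

Definition fa_probability (mu : set Omega -> R) :=
  [/\ mu setT = 1, (forall A, 0 <= mu A) &
      (forall A B, A `&` B = set0 -> mu (A `|` B) = mu A + mu B)].

(* Integral of a bounded function w.r.t. a finitely additive probability on the
   power set: supremum of integrals of simple functions sum_i a_i 1_{A_i} below f. *)
Definition bint (mu : set Omega -> R) (f : Omega -> R) : R :=
  sup [set r | exists (n : nat) (a : 'I_n -> R) (A : 'I_n -> set Omega),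
        (forall x, \sum_(i < n) a i * \1_(A i) x <= f x) /\
        r = \sum_(i < n) a i * mu (A i)].

Definition fa_integral (mu : set Omega -> R) (f : Omega -> R) : \bar R :=
  let u := fun n : nat =>
    (bint mu (fun x => Num.min (Num.max (f x) 0) n%:R
                       - Num.min (Num.max (- f x) 0) n%:R))%:E in
  if `[< cvgn u >] then limn u else +oo%E.

(* simple functions: finitely many values (all subsets are measurable) *)
Definition simple_fun (f : Omega -> R) := exists s : seq R, forall x, f x \in s.

Definition DS_integrable (mu : set Omega -> R) (f : Omega -> R) :=
  exists s : nat -> Omega -> R,
    [/\ (forall n, simple_fun (s n)),
        (forall eps : R, 0 < eps ->
           (fun n => mu [set x | eps < `|s n x - f x|]) @ \oo --> (0 : R)) &
        (forall eps : R, 0 < eps -> exists N : nat, forall n k : nat,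
           (N <= n)%N -> (N <= k)%N -> bint mu (fun x => `|s n x - s k x|) <= eps)].

Definition P_order (ge : (Omega -> R) -> (Omega -> R) -> Prop) (mu : set Omega -> R) :=
  fa_probability mu /\ forall N : set Omega, ge (cst 0) \1_N -> mu N = 0.

Definition Gamma_order (ge : (Omega -> R) -> (Omega -> R) -> Prop) (G : set (Omega -> R)) :=
  [set f | G f /\ exists a : R, ge f (cst a)].

End Defs.

(* Main.v *)
Require Import Defs.
From HB Require Import structures.
From mathcomp Require Import all_boot all_order all_algebra.
From mathcomp Require Import all_classical all_reals all_analysis.
From mathcomp Require Import ring lra zify.
Import Order.TTheory GRing.Theory Num.Theory.
Local Open Scope classical_set_scope.
Local Open Scope ring_scope.
Section OrderLemmas.
Context {R : realType} {Omega : Type} {ge : (Omega -> R) -> (Omega -> R) -> Prop}.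
Hypothesis Hge : regular_stochastic_order ge.

Lemma ge_refl f : ge f f. Proof. by case: Hge. Qed.
Lemma ge_trans {f g h} : ge f g -> ge g h -> ge f h.
Proof. by case: Hge => _ T _ _; apply: T. Qed.
Lemma ge_triv : ~ ge (cst 0) (cst 1). Proof. by case: Hge. Qed.

Lemma ge_ext {f g f' g'} : ge f g -> f =1 f' -> g =1 g' -> ge f' g'.
Proof. by move=> H /funext <- /funext <-. Qed.

Lemma ge_cone {f1 f2 g1 g2} {a1 a2 : R} : ge f1 g1 -> ge f2 g2 ->
  0 <= a1 -> 0 <= a2 ->
  ge (fun x => a1 * f1 x + a2 * f2 x) (fun x => a1 * g1 x + a2 * g2 x).
Proof. by case: Hge => _ _ _ [C _ _ _]; apply: C. Qed.

Lemma ge_add {f1 f2 g1 g2} : ge f1 g1 -> ge f2 g2 ->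
  ge (fun x => f1 x + f2 x) (fun x => g1 x + g2 x).
Proof.
move=> H1 H2; have := ge_cone H1 H2 (@ler01 R) (@ler01 R).
by move/ge_ext; apply => x; rewrite !mul1r.
Qed.

Lemma ge_scale (a : R) {f g} : 0 <= a -> ge f g ->
  ge (fun x => a * f x) (fun x => a * g x).
Proof.
move=> a0 H; have := (ge_cone H H a0 (lexx (0:R))); move/ge_ext; apply => x; by rewrite mul0r addr0.
Qed.

Lemma ge_cert {f} : (forall x, 0 <= f x) -> ge f (cst 0).
Proof. by case: Hge => _ _ _ [_ C _ _]; apply: C. Qed.

Lemma ge_rest {f} (A : set Omega) : ge f (cst 0) -> ge (f \* \1_A) (cst 0).
Proof. by case: Hge => _ _ _ [_ _ _ C]; apply: C. Qed.

Lemma ge_sub0 {f g} : ge f g -> ge (fun x => f x - g x) (cst 0).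
Proof.
move=> H; have := (ge_add H (ge_refl (fun x => - g x))); move/ge_ext; apply => x //=.
by rewrite subrr.
Qed.

Lemma ge_of_sub0 {f g} : ge (fun x => f x - g x) (cst 0) -> ge f g.
Proof.
move=> H; have := (ge_add H (ge_refl g)); move/ge_ext; apply => x /=; first by rewrite subrK.
by rewrite add0r.
Qed.

Lemma ge_le {f g} : (forall x, g x <= f x) -> ge f g.
Proof. by move=> H; apply: ge_of_sub0; apply: ge_cert => x; rewrite subr_ge0. Qed.

Lemma ge_null f (a e : R) : ge f (cst a) -> 0 < e ->
  ge (cst 0) \1_[set x | f x < a - e].
Proof.
move=> H e0; set N := [set x | f x < a - e].
have H1 := ge_rest N (ge_sub0 H).
have H2 : ge (fun x => - ((f x - a) * \1_N x) - e * \1_N x) (cst 0).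
  apply: ge_cert => x; rewrite indicE; case: (boolP (x \in N)).
    rewrite inE /N /= => hx; rewrite mulr1; lra.
  by move=> _ /=; rewrite !mulr0; lra.
have H3 := ge_add H1 H2.
have H4 : ge (fun x => - (1 * \1_N x)) (cst 0).
  have ei : 0 <= e^-1 by rewrite invr_ge0 ltW.
  have := ge_scale e^-1 ei H3.
  move=> H5; have := H5; move/ge_ext; apply => x /=.
    by rewrite addrA addrN add0r mulrN mulrA mulVf ?gt_eqF.
  by rewrite addr0 mulr0.
apply: ge_of_sub0; have := H4; move/ge_ext; apply => x //=; by rewrite mul1r sub0r.
Qed.
End OrderLemmas.
Section FA.
Context {R : realType} {Omega : Type}.
Variable m : set Omega -> R.
Hypothesis Hm : fa_probability m.

Lemma m_add A B : A `&` B = set0 -> m (A `|` B) = m A + m B.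
Proof. by case: Hm => _ _; apply. Qed.
Lemma m_ge0 A : 0 <= m A. Proof. by case: Hm. Qed.
Lemma m_T : m setT = 1. Proof. by case: Hm. Qed.

Lemma m_split A C : m A = m (A `&` C) + m (A `&` ~` C).
Proof.
rewrite -m_add; first by rewrite -setIUr setUCr setIT.
by rewrite setIACA setIid setICr setI0.
Qed.

Lemma m_set0 : m set0 = 0.
Proof. have := m_split set0 set0; rewrite !set0I; lra. Qed.

Lemma fa_pos_gen n : forall (c : 'I_n -> R) (C : 'I_n -> set Omega) (d : R)
  (E : set Omega),
  (forall x, E x -> 0 <= \sum_(i < n) c i * \1_(C i) x + d) ->
  0 <= \sum_(i < n) c i * m (C i `&` E) + d * m E.
Proof.
elim: n => [|n IH] c C d E H.
  rewrite big_ord0 add0r.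
  have [->|En] := eqVneq E set0; first by rewrite m_set0 mulr0.
  by move/set0P: En => [x Ex]; have := H x Ex; rewrite big_ord0 add0r => d0; rewrite mulr_ge0 // m_ge0.
set c' := fun i : 'I_n => c (widen_ord (leqnSn n) i).
set C' := fun i : 'I_n => C (widen_ord (leqnSn n) i).
set Cm := C ord_max.
have h1 := IH c' C' (d + c ord_max) (E `&` Cm).
have h2 := IH c' C' d (E `&` ~` Cm).
have {h1} h1 : 0 <= \sum_(i < n) c' i * m (C' i `&` (E `&` Cm)) + (d + c ord_max) * m (E `&` Cm).
  apply: h1 => x [Ex Cx]; have := H x Ex; rewrite big_ord_recr /=.
  rewrite indicE mem_set // mulr1 /c' /C' => h; lra.
have {h2} h2 : 0 <= \sum_(i < n) c' i * m (C' i `&` (E `&` ~` Cm)) + d * m (E `&` ~` Cm).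
  apply: h2 => x [Ex Cx]; have := H x Ex; rewrite big_ord_recr /=.
  rewrite indicE memNset // mulr0 addr0 /c' /C' => h; lra.
rewrite big_ord_recr /=.
rewrite (eq_bigr (fun i => c' i * m (C' i `&` (E `&` Cm)) + c' i * m (C' i `&` (E `&` ~` Cm)))); last first.
  by move=> i _; rewrite -mulrDr !setIA -m_split.
rewrite big_split /= (m_split E Cm) [C ord_max `&` E]setIC.
rewrite -/Cm.
lra.
Qed.

Definition bset (h : Omega -> R) := [set r | exists (n : nat) (a : 'I_n -> R) (A : 'I_n -> set Omega),
        (forall x, \sum_(i < n) a i * \1_(A i) x <= h x) /\
        r = \sum_(i < n) a i * m (A i)].

Lemma bintE h : bint m h = sup (bset h). Proof. by []. Qed.

Lemma bset_ub h B : (forall x, h x <= B) -> ubound (bset h) B.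
Proof.
move=> hB r [n [a [A [Hs ->]]]].
have := @fa_pos_gen n (fun i => - a i) A B setT.
rewrite m_T mulr1.
under eq_bigr do rewrite setIT mulNr.
rewrite sumrN => H; rewrite -subr_ge0 addrC; apply: H => x _.
under eq_bigr do rewrite mulNr.
rewrite sumrN addrC subr_ge0; exact: le_trans (Hs x) (hB x).
Qed.

Lemma bint_ge h B n (a : 'I_n -> R) (A : 'I_n -> set Omega) :
  (forall x, h x <= B) -> (forall x, \sum_(i < n) a i * \1_(A i) x <= h x) ->
  \sum_(i < n) a i * m (A i) <= bint m h.
Proof.
move=> hB Hs; rewrite bintE; apply: sup_upper_bound.
  split; first by exists (\sum_(i < n) a i * m (A i)); exists n, a, A.
  by exists B; apply: bset_ub.
by exists n, a, A.
Qed.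
End FA.
Definition trn {R : realType} (k y : R) :=
  Num.min (Num.max y 0) k - Num.min (Num.max (- y) 0) k.

Lemma trn_ub {R : realType} (k y : R) : 0 <= k -> trn k y <= k.
Proof.
move=> k0; rewrite /trn.
have h1 : Num.min (Num.max y 0) k <= k by rewrite ge_min lexx orbT.
have h2 : 0 <= Num.min (Num.max (- y) 0) k by rewrite le_min k0 le_max lexx orbT.
lra.
Qed.

Lemma trn_lb {R : realType} (k y : R) : 0 <= k -> - k <= trn k y.
Proof.
move=> k0; rewrite /trn.
have h1 : Num.min (Num.max (-y) 0) k <= k by rewrite ge_min lexx orbT.
have h2 : 0 <= Num.min (Num.max y 0) k by rewrite le_min k0 le_max lexx orbT.
lra.
Qed.

Lemma trn_eq {R : realType} (k y : R) : 0 <= k -> - k <= y -> trn k y = Num.min y k.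
Proof.
move=> k0 yk; rewrite /trn; case: (boolP (0 <= y)) => y0; last (move: y0; rewrite -ltNge => y0).
  rewrite (max_l y0) (max_r (_ : - y <= 0)) ?(min_l k0) ?subr0 //; lra.
rewrite (max_r (ltW y0)) (max_l (_ : 0 <= - y)) ?(min_l k0) ?(min_l (_ : - y <= k)) ?(min_l (_ : y <= k)); lra.
Qed.

Lemma trn_half {R : realType} (k y : R) : 1 <= k -> 1/2 <= y -> 1/2 <= trn k y.
Proof.
move=> k1 y1; rewrite trn_eq; try lra.
by rewrite le_min; apply/andP; split; lra.
Qed.

Lemma backward (R : realType) (Omega : Type) ge (G : set (Omega -> R)) m f :
  regular_stochastic_order ge -> P_order ge m -> G f -> ge f (cst 1) ->
  (ereal_sup [set fa_integral m f | f in Gamma_order ge G] <= 0)%E -> False.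
Proof.
move=> Hge [Hm Hnull] Gf f1 Hsup.
set N := [set x | f x < 1 - 1/2].
have mN : m N = 0 by apply: Hnull; apply: (@ge_null R Omega ge Hge f 1 (1/2) f1); lra.
have key : forall k : nat, (1 <= k)%N ->
  1/2 <= bint m (fun x => trn k%:R (f x)).
  move=> k k1.
  have k1' : (1 : R) <= k%:R by rewrite ler1n.
  pose a := fun i : 'I_2 => if val i == 0%N then (1/2 : R) else - (k%:R + 1/2).
  pose A := fun i : 'I_2 => if val i == 0%N then setT else N.
  have hs : forall x, \sum_(i < 2) a i * \1_(A i) x <= trn k%:R (f x).
    move=> x; rewrite !big_ord_recr big_ord0 /= /a /A /= !indicE.
    have -> : (x \in [set: Omega]) = true by apply/mem_set.
    have hb := trn_lb k%:R (f x) (ler0n R k).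
    case: (boolP (x \in N)) => xN /=; rewrite ?mulr1n ?mulr0n.
      lra.
    have xN' : ~ (f x < 1 - 1/2) by move=> h; move/negP: xN; apply; apply/mem_set.
    have fx : 1/2 <= f x by rewrite leNgt; apply/negP => h; apply: xN'; lra.
    have := trn_half k%:R (f x) k1' fx; lra.
  have := @bint_ge R Omega m Hm (fun x => trn k%:R (f x)) k%:R 2 a A (fun x => trn_ub k%:R (f x) (ler0n R k)) hs.
  rewrite !big_ord_recr big_ord0 /= /a /A /= m_T // mN.
  by rewrite add0r mulr1 mulr0 addr0.
have GO : Gamma_order ge G f by split => //; exists 1.
have h0 : [set fa_integral m g | g in Gamma_order ge G] (fa_integral m f) by exists f.
have := ereal_sup_ubound h0.
move/le_trans/(_ Hsup); rewrite /fa_integral.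
case: ifPn => [/asboolP cv|]; last by [].
have : ((1/2 : R)%:E <= limn (fun n : nat => (bint m (fun x => trn n%:R (f x)))%:E))%E.
  apply: lime_ge => //; exists 1%N => // n /= n1; rewrite lee_fin; exact: key.
move=> h1 h2; have := le_trans h1 h2; rewrite lee_fin; lra.
Qed.
Definition bnd {R : realType} {Omega : Type} (h : Omega -> R) :=
  exists M : R, forall x, `|h x| <= M.

Lemma bnd_comb {R : realType} {Omega : Type} {x y : Omega -> R} (al be : R) :
  bnd x -> bnd y -> bnd (fun z => al * x z + be * y z).
Proof.
move=> [M hM] [N hN]; exists (`|al| * M + `|be| * N) => z.
apply: le_trans (ler_normD _ _) _; rewrite !normrM.
by apply: lerD; apply: ler_wpM2l.
Qed.

Lemma bnd_cst {R : realType} {Omega : Type} (c : R) : bnd (fun _ : Omega => c).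
Proof. by exists `|c|. Qed.

Lemma bnd_ext {R : realType} {Omega : Type} {f g : Omega -> R} : bnd f -> f =1 g -> bnd g.
Proof. by move=> H /funext <-. Qed.

Section HahnBanach.
Variables (R : realType) (Omega : Type) (ge : (Omega -> R) -> (Omega -> R) -> Prop)
  (G : set (Omega -> R)).
Hypothesis Hge : regular_stochastic_order ge.
Hypothesis HG : convex_cone G.
Hypothesis Hno : ~ exists f, G f /\ ge f (cst 1).

Definition G0 (g : Omega -> R) := G g \/ g = cst 0.
Definition dom (t : R) (h : Omega -> R) :=
  exists g, G0 g /\ ge (fun x => t + g x) h.

Lemma G0_comb f g (a b : R) : G0 f -> G0 g -> 0 <= a -> 0 <= b ->
  G0 (fun x => a * f x + b * g x).
Proof.
move=> [Gf|->] [Gg|->] a0 b0.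
- by left; apply: HG.
- left; have := HG f f a 0 Gf Gf a0 (lexx 0).
  by have -> : (fun x => a * f x + 0 * f x) = (fun x => a * f x + b * cst 0 x)
    by apply/funext => x /=; rewrite !mulr0 !mul0r.
- left; have := HG g g b 0 Gg Gg b0 (lexx 0).
  by have -> : (fun x => b * g x + 0 * g x) = (fun x => a * cst 0 x + b * g x)
    by apply/funext => x /=; rewrite !mulr0 !mul0r add0r addr0.
- by right; apply/funext => x /=; rewrite !mulr0 addr0.
Qed.

Lemma dom_ext {t h h'} : dom t h -> h =1 h' -> dom t h'.
Proof. by move=> H /funext <-. Qed.

Lemma dom_le t h : (forall x, h x <= t) -> dom t h.
Proof.
move=> H; exists (cst 0); split; first by right.
by apply: (ge_le Hge) => x /=; rewrite addr0.
Qed.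

Lemma dom_add {s t h1 h2} : dom s h1 -> dom t h2 -> dom (s + t) (fun x => h1 x + h2 x).
Proof.
move=> [g1 [G1 H1]] [g2 [G2 H2]]; exists (fun x => 1 * g1 x + 1 * g2 x); split.
  by apply: G0_comb.
have := ge_add Hge H1 H2; move=> /ge_ext HH; apply: HH => x //.
by rewrite !mul1r; lra.
Qed.

Lemma dom_scale {l t : R} {h} : 0 <= l -> dom t h -> dom (l * t) (fun x => l * h x).
Proof.
move=> l0 [g [G1 H1]]; exists (fun x => l * g x + 0 * g x); split.
  by apply: G0_comb.
have := ge_scale Hge l l0 H1; move=> /ge_ext HH; apply: HH => x //.
by rewrite mul0r addr0 mulrDr.
Qed.

Lemma dom_lb t h (c : R) : dom t h -> (forall x, c <= h x) -> c <= t.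
Proof.
move=> [g [G1 H1]] hc; rewrite leNgt; apply/negP => tc.
have H2 : ge (fun x => t + g x) (cst c) by apply: (ge_trans Hge H1); apply: (ge_le Hge).
have H3 : ge g (cst (c - t)).
  apply: (ge_of_sub0 Hge); have := ge_sub0 Hge H2; move=> /ge_ext HH; apply: HH => x //=.
  lra.
set l := (c - t)^-1.
have l0 : 0 < l by rewrite invr_gt0 subr_gt0.
have H4 := ge_scale Hge l (ltW l0) H3.
have H5 : ge (fun x => l * g x + 0 * g x) (cst 1).
  move: H4 => /ge_ext HH; apply: HH => x //=; first by rewrite mul0r addr0.
  by rewrite mulVf // gt_eqF // subr_gt0.
have [Gl|Gl] := G0_comb g g l 0 G1 G1 (ltW l0) (lexx 0).
  by apply: Hno; exists (fun x => l * g x + 0 * g x).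
by apply: (ge_triv Hge); rewrite -Gl.
Qed.

Definition valid (Gr : set ((Omega -> R) * R)) :=
  [/\ (forall x a b, Gr (x, a) -> Gr (x, b) -> a = b),
      (forall x y a b (al be : R), Gr (x, a) -> Gr (y, b) ->
          Gr ((fun z => al * x z + be * y z), al * a + be * b)),
      (forall x a, Gr (x, a) -> bnd x) &
      (forall x a t, Gr (x, a) -> dom t x -> a <= t)].

Lemma valid_chain (F : set (set ((Omega -> R) * R))) :
  F `<=` valid -> total_on F subset -> valid (\bigcup_(X in F) X).
Proof.
move=> Fv Ft; split.
- move=> x a b [X FX Xa] [Y FY Yb].
  have [XY|YX] := Ft _ _ FX FY.
    by case: (Fv _ FY) => HF _ _ _; exact: (HF x a b (XY _ Xa) Yb).
  by case: (Fv _ FX) => HF _ _ _; exact: (HF x a b Xa (YX _ Yb)).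
- move=> x y a b al be [X FX Xa] [Y FY Yb].
  have [XY|YX] := Ft _ _ FX FY.
    by exists Y => //; case: (Fv _ FY) => _ HL _ _; exact: (HL _ _ _ _ _ _ (XY _ Xa) Yb).
  by exists X => //; case: (Fv _ FX) => _ HL _ _; exact: (HL _ _ _ _ _ _ Xa (YX _ Yb)).
- by move=> x a [X FX Xa]; case: (Fv _ FX) => _ _ HB _; exact: HB Xa.
- by move=> x a t [X FX Xa]; case: (Fv _ FX) => _ _ _ HD; exact: HD.
Qed.

Lemma valid_zero : valid [set (cst 0, 0)].
Proof.
split.
- by move=> x a b [_ ->] [_ ->].
- move=> x y a b al be [-> ->] [-> ->]; congr pair.
    by apply/funext => z /=; rewrite !mulr0 addr0.
  by rewrite !mulr0 addr0.
- by move=> x a [-> _]; apply: bnd_cst.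
- by move=> x a t [-> ->] H; exact: (@dom_lb t (cst 0) 0 H (fun z => lexx (0:R))).
Qed.

Lemma hahn_banach : exists phi : (Omega -> R) -> R,
  (forall x y (al be : R), bnd x -> bnd y ->
     phi (fun z => al * x z + be * y z) = al * phi x + be * phi y) /\
  (forall h t, bnd h -> dom t h -> phi h <= t).
Proof.
have [Gr [vGr maxGr]] := @Zorn_bigcup _ valid valid_chain.
case: (vGr) => GF GL GB GD.
have G00 : Gr (cst 0, 0).
  apply: contrapT => nG.
  case: (pselect (exists p, Gr p)) => [[[x a] Gxa]|nE].
    apply: nG; have := GL x x a a 0 0 Gxa Gxa.
    have -> : (fun z => 0 * x z + 0 * x z) = cst 0 by apply/funext => z; rewrite !mul0r addr0.
    by rewrite !mul0r addr0.
  apply: (maxGr [set (cst 0, 0)]) valid_zero; split.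
    by move=> p Gp; exfalso; apply: nE; exists p.
  by move=> H; apply: nG; apply: H.
have full : forall h, bnd h -> exists a, Gr (h, a).
  move=> h0 [M hM]; apply: contrapT => nh.
  have hb z : - M <= h0 z <= M by rewrite -ler_norml.
  set L := [set r | exists x a t, Gr (x, a) /\ dom t (fun z => x z - h0 z) /\ r = a - t].
  have Ub : forall y b t, Gr (y, b) -> dom t (fun z => y z + h0 z) -> ubound L (t - b).
    move=> y b t Gy dy r [x [a [t' [Gx [dx ->]]]]].
    have dxy : dom (t' + t) (fun z => 1 * x z + 1 * y z).
      apply: dom_ext (dom_add dx dy) _ => z /=; rewrite !mul1r; lra.
    have := GD _ _ _ (GL x y a b 1 1 Gx Gy) dxy; rewrite !mul1r; lra.
  have domM1 : dom M (fun z => cst 0 z - h0 z).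
    by apply: dom_le => z /=; have := hb z; lra.
  have domM2 : dom M (fun z => cst 0 z + h0 z).
    by apply: dom_le => z /=; have := hb z; lra.
  have L0 : L (0 - M) by exists (cst 0), 0, M.
  have Lne : L !=set0 by exists (0 - M).
  have hsL : has_sup L by split => //; exists (M - 0); apply: Ub G00 domM2.
  set c := sup L.
  have cL : forall r, L r -> r <= c by move=> r Lr; apply: sup_upper_bound.
  have cU : forall y b t, Gr (y, b) -> dom t (fun z => y z + h0 z) -> c <= t - b.
    by move=> y b t Gy dy; apply: ge_sup => //; apply: Ub Gy dy.
  set Ext := [set p | exists x a l, Gr (x, a) /\
    p = ((fun z => x z + l * h0 z), a + l * c)].
  have vExt : valid Ext.
    split.
    - move=> p a1 a2 [x [a [l [Gx e1]]]] [x' [a' [l' [Gx' e2]]]].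
      case: e1 => ep ->; rewrite ep in e2; case: e2 => ex ->.
      have exz z : x z + l * h0 z = x' z + l' * h0 z by have := congr1 (fun f => f z) ex.
      case: (eqVneq l l') => [el|nl].
        have exx : x = x' by apply/funext => z; have := exz z; rewrite el; lra.
        by rewrite -exx in Gx'; rewrite (GF _ _ _ Gx Gx') el.
      exfalso; apply: nh; set mu := (l - l')^-1.
      have nl' : l - l' != 0 by rewrite subr_eq0.
      exists (mu * a' + (- mu) * a).
      have := GL x' x a' a mu (- mu) Gx' Gx.
      suff -> : (fun z => mu * x' z + - mu * x z) = h0 by [].
      apply/funext => z; have e : x' z = x z + (l - l') * h0 z by have := exz z; lra.
      rewrite e /mu; field => //.
    - move=> p q a1 a2 al be [x [a [l [Gx e1]]]] [y [b [k [Gy e2]]]].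
      case: e1 => -> ->; case: e2 => -> ->.
      exists (fun z => al * x z + be * y z), (al * a + be * b), (al * l + be * k).
      split; first exact: GL.
      by congr pair; [apply/funext => z|]; ring.
    - move=> p a1 [x [a [l [Gx e1]]]]; case: e1 => -> _.
      apply: bnd_ext (bnd_comb 1 l (GB _ _ Gx) (ex_intro _ M hM)) _ => z.
      by rewrite mul1r.
    - move=> p a1 t [x [a [l [Gx e1]]]]; case: e1 => -> -> dt.
      case: (ltgtP l 0) => [lneg|lpos|l0].
      + set nu := - l^-1.
        have nu0 : 0 <= nu by rewrite /nu oppr_ge0 invr_le0 ltW.
        have dnu := dom_scale nu0 dt.
        have dnu' : dom (nu * t) (fun z => (nu * x z + 0 * x z) - h0 z).
          apply: dom_ext dnu _ => z /=; rewrite /nu; field; by rewrite lt_eqF.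
        have hc := cL _ (ex_intro _ _ (ex_intro _ _ (ex_intro _ _
          (conj (GL x x a a nu 0 Gx Gx) (conj dnu' erefl))))).
        have nl0 : 0 < - l by rewrite oppr_gt0.
        have := ler_wpM2l (ltW nl0) hc.
        have E : - l * (nu * a + 0 * a - nu * t) = a - t.
          by rewrite /nu; field; rewrite lt_eqF.
        rewrite E; lra.
      + set mu := l^-1.
        have mu0 : 0 <= mu by rewrite /mu invr_ge0 ltW.
        have dmu := dom_scale mu0 dt.
        have dmu' : dom (mu * t) (fun z => (mu * x z + 0 * x z) + h0 z).
          apply: dom_ext dmu _ => z /=; rewrite /mu; field; by rewrite gt_eqF.
        have hc := cU _ _ _ (GL x x a a mu 0 Gx Gx) dmu'.
        have := ler_wpM2l (ltW lpos) hc.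
        have E : l * (mu * t - (mu * a + 0 * a)) = t - a.
          by rewrite /mu; field; rewrite gt_eqF.
        rewrite E; lra.
      + rewrite l0 in dt *; rewrite mul0r addr0; apply: GD Gx _.
        by apply: dom_ext dt _ => z /=; rewrite mul0r addr0.
  apply: (maxGr Ext) vExt; split.
    move=> [x a] Gx; exists x, a, 0; split => //.
    by congr pair; [apply/funext => z|]; rewrite mul0r addr0.
  move=> sub; apply: nh; exists c; apply: sub.
  exists (cst 0), 0, 1; split => //.
  by congr pair; [apply/funext => z|]; rewrite mul1r add0r.
pose phi h := xget 0 [set a | Gr (h, a)].
have phiP : forall h, bnd h -> Gr (h, phi h) by move=> h /full ex; exact: (@xgetPex _ 0 [set a | Gr (h, a)] ex).
exists phi; split.
  move=> x y al be bx b_y.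
  exact: GF _ _ _ (phiP _ (bnd_comb al be bx b_y)) (GL _ _ _ _ al be (phiP x bx) (phiP y b_y)).
by move=> h t bh dh; exact: GD _ _ _ (phiP h bh) dh.
Qed.
End HahnBanach.
Lemma simple_repr {R : realType} {Omega : Type} (f : Omega -> R) : simple_fun f ->
  exists n (a : 'I_n -> R) (A : 'I_n -> set Omega),
    forall x, f x = \sum_(i < n) a i * \1_(A i) x.
Proof.
move=> [s hs]; set s' := undup s.
exists (size s'), (fun i => nth 0 s' i), (fun i => [set y | f y = nth 0 s' i]) => x.
pose F := fun r : R => r * \1_([set y | f y = r]) x.
have -> : \sum_(i < size s') nth 0 s' i * \1_([set y | f y = nth 0 s' i]) x
   = \sum_(i < size s') F (nth 0 s' i) by [].
have -> : \sum_(i < size s') F (nth 0 s' i) = \sum_(r <- s') F r by rewrite (big_nth 0) big_mkord.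
have fs : f x \in s' by rewrite mem_undup.
rewrite (bigD1_seq (f x)) ?undup_uniq //= big1.
  by rewrite addr0 /F indicE mem_set // mulr1.
by move=> r /eqP rf; rewrite /F indicE memNset ?mulr0 //= => e; apply: rf.
Qed.

Definition disc {R : realType} {Omega : Type} (d : R) (h : Omega -> R) :=
  fun x => d * (Num.floor (h x / d))%:~R.

Lemma disc_le {R : realType} {Omega : Type} (d : R) (h : Omega -> R) x :
  0 < d -> disc d h x <= h x.
Proof.
move=> d0; rewrite /disc.
have := floor_le (h x / d); rewrite -(ler_pM2l d0) mulrCA mulfV ?gt_eqF // mulr1.
by [].
Qed.

Lemma disc_gt {R : realType} {Omega : Type} (d : R) (h : Omega -> R) x :
  0 < d -> h x - d < disc d h x.
Proof.
move=> d0; rewrite /disc.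
have := floorD1_gt (h x / d); rewrite -(ltr_pM2l d0) mulrCA mulfV ?gt_eqF // mulr1.
rewrite intrD mulrDr mulr1; lra.
Qed.

Lemma disc_simple {R : realType} {Omega : Type} (d : R) (h : Omega -> R) :
  0 < d -> bnd h -> simple_fun (disc d h).
Proof.
move=> d0 [M hM].
set lo := Num.floor (- M / d); set hi := Num.floor (M / d).
exists [seq d * (lo + i%:Z)%:~R | i <- iota 0 (absz (hi - lo)).+1] => x.
have hb : - M <= h x <= M by rewrite -ler_norml.
have l1 : lo <= Num.floor (h x / d).
  by apply: le_floor; rewrite ler_pM2r ?invr_gt0 //; case/andP: hb.
have l2 : Num.floor (h x / d) <= hi.
  by apply: le_floor; rewrite ler_pM2r ?invr_gt0 //; case/andP: hb.
apply/mapP; exists (absz (Num.floor (h x / d) - lo)).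
  rewrite mem_iota add0n ltnS; lia.
rewrite /disc; congr (_ * _); congr intr; lia.
Qed.
Lemma bnd_ind {R : realType} {Omega : Type} (A : set Omega) : bnd (\1_A : Omega -> R).
Proof.
exists 1 => x; rewrite indicE; case: (x \in A) => /=; by rewrite ?normr1 ?normr0.
Qed.

Lemma bnd_simple {R : realType} {Omega : Type} n (a : 'I_n -> R) (A : 'I_n -> set Omega) :
  bnd (fun x => \sum_(i < n) a i * \1_(A i) x).
Proof.
elim: n a A => [|n IH] a A.
  by apply: (bnd_ext (bnd_cst 0)) => x; rewrite big_ord0.
have := bnd_comb 1 (a ord_max) (IH (fun i => a (widen_ord (leqnSn n) i))
  (fun i => A (widen_ord (leqnSn n) i))) (bnd_ind (A ord_max)).
by move/bnd_ext; apply => x; rewrite big_ord_recr /= mul1r.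
Qed.

Section PhiMeas.
Context {R : realType} {Omega : Type} {ge : (Omega -> R) -> (Omega -> R) -> Prop}
  {G : set (Omega -> R)}.
Hypothesis Hge : regular_stochastic_order ge.
Variable phi : (Omega -> R) -> R.
Hypothesis Hlin : forall x y (al be : R), bnd x -> bnd y ->
     phi (fun z => al * x z + be * y z) = al * phi x + be * phi y.
Hypothesis Hdom : forall h t, bnd h -> @dom R Omega ge G t h -> phi h <= t.

Lemma domle t h : (forall x, h x <= t) -> @dom R Omega ge G t h.
Proof.
move=> H; exists (cst 0); split; first by right.
by apply: (ge_le Hge) => x /=; rewrite addr0.
Qed.

Lemma phiAdd x y : bnd x -> bnd y -> phi (fun z => x z + y z) = phi x + phi y.
Proof.
move=> bx b_y; have := Hlin _ _ 1 1 bx b_y; rewrite !mul1r => <-.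
by congr phi; apply/funext => z; rewrite !mul1r.
Qed.

Lemma phiScale (a : R) x : bnd x -> phi (fun z => a * x z) = a * phi x.
Proof.
move=> bx; have := Hlin _ _ a 0 bx bx; rewrite mul0r addr0 => <-.
by congr phi; apply/funext => z; rewrite mul0r addr0.
Qed.

Lemma phiOpp x : bnd x -> phi (fun z => - x z) = - phi x.
Proof.
move=> bx; rewrite -mulN1r -phiScale //; congr phi; apply/funext => z; by rewrite mulN1r.
Qed.


Lemma phiSub x y : bnd x -> bnd y -> phi (fun z => x z - y z) = phi x - phi y.
Proof.
move=> bx b_y; have := Hlin _ _ 1 (-1) bx b_y; rewrite mul1r mulN1r => <-.
by congr phi; apply/funext => z; rewrite mul1r mulN1r.
Qed.

Lemma phi_ge0 h : bnd h -> (forall x, 0 <= h x) -> 0 <= phi h.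
Proof.
move=> bh h0; have bn : bnd (fun z => - h z).
  by apply: (bnd_ext (bnd_comb (-1) 0 bh bh)) => z; rewrite mulN1r mul0r addr0.
have hd : @dom R Omega ge G 0 (fun z => - h z) by apply: domle => x; rewrite oppr_le0.
by have := Hdom _ 0 bn hd; rewrite phiOpp // oppr_le0.
Qed.

Lemma phi_mono h1 h2 : bnd h1 -> bnd h2 -> (forall x, h1 x <= h2 x) -> phi h1 <= phi h2.
Proof.
move=> b1 b2 H; rewrite -subr_ge0 -phiSub //; apply: phi_ge0.
  by apply: (bnd_ext (bnd_comb 1 (-1) b2 b1)) => z; rewrite mul1r mulN1r.
by move=> x; rewrite subr_ge0.
Qed.

Lemma phi_cst (c : R) : phi (fun _ => c) = c.
Proof.
have b1 : bnd (fun _ : Omega => (1 : R)) by apply: bnd_cst.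
have h1 : phi (fun _ => 1) <= 1 by apply: Hdom => //; apply: domle.
have h2 : phi (fun _ => -1) <= -1 by apply: Hdom; [apply: bnd_cst|apply: domle].
have e : phi (fun _ => -1) = - phi (fun _ => 1) by rewrite -phiOpp.
have e1 : phi (fun _ => 1) = 1 by lra.
by have := phiScale c _ b1; rewrite e1; under eq_fun do rewrite mulr1; rewrite mulr1.
Qed.

Definition mphi (A : set Omega) := phi \1_A.

Lemma mphi_fa : fa_probability mphi.
Proof.
split.
- rewrite /mphi -(phi_cst 1); congr phi; apply/funext => x.
  by rewrite indicE; have -> : (x \in [set: Omega]) = true by apply/mem_set.
- by move=> A; apply: phi_ge0; [apply: bnd_ind|move=> x; rewrite indicE ler0n].
- move=> A B AB; rewrite /mphi -phiAdd; [|exact: bnd_ind..]; congr phi; apply/funext => x.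
  rewrite !indicE in_setU.
  case: (boolP (x \in A)) => xA; case: (boolP (x \in B)) => xB //=.
  - exfalso; have : (A `&` B) x by split; apply/set_mem.
    by rewrite AB.
  - by rewrite addr0.
  - by rewrite add0r.
  - by rewrite addr0.
Qed.

Lemma mphi_null N : ge (cst 0) \1_N -> mphi N = 0.
Proof.
move=> HN; apply/eqP; rewrite eq_le; apply/andP; split.
  apply: Hdom; first exact: bnd_ind.
  exists (cst 0); split; first by right.
  by apply: (ge_ext HN) => x //=; rewrite addr0.
by apply: phi_ge0; [apply: bnd_ind|move=> x; rewrite indicE ler0n].
Qed.

Lemma mphi_P : P_order ge mphi.
Proof. split; [exact: mphi_fa|exact: mphi_null]. Qed.

Lemma phi_sum n (a : 'I_n -> R) (A : 'I_n -> set Omega) :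
  phi (fun x => \sum_(i < n) a i * \1_(A i) x) = \sum_(i < n) a i * mphi (A i).
Proof.
elim: n a A => [|n IH] a A.
  have -> : (fun x => \sum_(i < 0) a i * \1_(A i) x) = (fun _ => 0).
    by apply/funext => x; rewrite big_ord0.
  by rewrite phi_cst big_ord0.
rewrite big_ord_recr /= -IH -phiScale; last exact: bnd_ind.
rewrite -phiAdd; first by congr phi; apply/funext => x; rewrite big_ord_recr.
  exact: bnd_simple.
by apply: (bnd_ext (bnd_comb (a ord_max) 0 (bnd_ind (A ord_max)) (bnd_ind (A ord_max)))) => x; rewrite mul0r addr0.
Qed.

Lemma bint_phi h : bnd h -> bint mphi h = phi h.
Proof.
move=> bh; rewrite bintE.
have ub : ubound (bset mphi h) (phi h).
  move=> r [n [a [A [Hs ->]]]]; rewrite -phi_sum.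
  by apply: phi_mono => //; apply: bnd_simple.
have approx : forall d, 0 < d -> exists2 r, bset mphi h r & phi h - d <= r.
  move=> d d0.
  have [n [a [A HA]]] := simple_repr _ (disc_simple d h d0 bh).
  have bd : bnd (disc d h) by apply: (bnd_ext (bnd_simple _ a A)) => x; rewrite HA.
  exists (phi (disc d h)).
    exists n, a, A; split; first by move=> x; rewrite -HA; apply: disc_le.
    by rewrite -phi_sum; congr phi; apply/funext => x; rewrite HA.
  have e := phiSub _ _ bh (bnd_cst d); rewrite /= phi_cst in e.
  rewrite -e; apply: phi_mono => //.
    by apply: (bnd_ext (bnd_comb 1 (-1) bh (bnd_cst d))) => z; rewrite mul1r mulN1r.
  by move=> x; apply: ltW; apply: disc_gt.
have ne : bset mphi h !=set0.
  by have [r hr _] := approx 1 ltr01; exists r.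
apply/eqP; rewrite eq_le; apply/andP; split; first by apply: ge_sup.
apply/ler_addgt0Pr => d d0; have [r hr hd] := approx d d0.
have : r <= sup (bset mphi h) by apply: sup_upper_bound => //; split => //; exists (phi h).
lra.
Qed.

End PhiMeas.
Lemma archi {R : realType} (x : R) : exists N : nat, x < N%:R.
Proof.
exists (Num.truncn `|x|).+1.
have h : `|x| < (Num.truncn `|x|).+1%:R by rewrite -truncn_lt_nat ?ltnSn.
exact: le_lt_trans (ler_norm x) h.
Qed.

Lemma bnd_bounds {R : realType} {Omega : Type} (h : Omega -> R) (lo hi : R) :
  (forall x, lo <= h x <= hi) -> bnd h.
Proof.
move=> H; exists (`|lo| + `|hi|) => x; have /andP[h1 h2] := H x.
rewrite ler_norml; apply/andP; split.
  have := ler_norm (- lo); rewrite normrN; have := normr_ge0 hi; lra.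
have := ler_norm hi; have := normr_ge0 lo; lra.
Qed.

Section Forward.
Context {R : realType} {Omega : Type} {ge : (Omega -> R) -> (Omega -> R) -> Prop}
  {G : set (Omega -> R)}.
Hypothesis Hge : regular_stochastic_order ge.
Variable phi : (Omega -> R) -> R.
Hypothesis Hlin : forall x y (al be : R), bnd x -> bnd y ->
     phi (fun z => al * x z + be * y z) = al * phi x + be * phi y.
Hypothesis Hdom : forall h t, bnd h -> @dom R Omega ge G t h -> phi h <= t.
Variables (f : Omega -> R) (a : R).
Hypothesis Gf : G f.
Hypothesis fa : ge f (cst a).

Local Notation m := (mphi phi).
Local Notation phiAdd := (phiAdd phi Hlin).
Local Notation phiSub := (phiSub phi Hlin).
Local Notation phiScale := (phiScale phi Hlin).
Local Notation phi_mono := (phi_mono Hge phi Hlin Hdom).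
Local Notation phi_ge0 := (phi_ge0 Hge phi Hlin Hdom).
Local Notation phi_cst := (phi_cst Hge phi Hlin Hdom).

Lemma phi_G h : bnd h -> ge f h -> phi h <= 0.
Proof.
move=> bh fh; apply: Hdom => //; exists f; split; first by left.
by apply: (ge_ext fh) => x //=; rewrite add0r.
Qed.

Definition Nn := [set x | f x < a - 1].

Lemma mN : m Nn = 0.
Proof. by apply: (mphi_null Hge phi Hlin Hdom); exact: (ge_null Hge f a 1 fa ltr01). Qed.

Lemma phi_supp h : bnd h -> (forall x, ~ Nn x -> h x = 0) -> phi h = 0.
Proof.
move=> bh H; have [M hM] := bh.
have bM : bnd (fun x => M * \1_Nn x) by apply: (bnd_ext (bnd_comb M 0 (bnd_ind Nn) (bnd_ind Nn))) => x; rewrite mul0r addr0.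
have e : phi (fun x => M * \1_Nn x) = 0.
  by rewrite phiScale; [rewrite -[phi \1_Nn]/(m Nn) mN mulr0|exact: bnd_ind].
have bM' : bnd (fun x => - (M * \1_Nn x)) by apply: (bnd_ext (bnd_comb (-1) 0 bM bM)) => x; rewrite mul0r addr0 mulN1r.
have e' : phi (fun x => - (M * \1_Nn x)) = 0.
  by rewrite (phiOpp phi Hlin) // e oppr0.
have hb x : - (M * \1_Nn x) <= h x <= M * \1_Nn x.
  rewrite indicE; case: (boolP (x \in Nn)) => xN /=; rewrite ?mulr1 ?mulr0.
    by rewrite -ler_norml.
  by rewrite H ?oppr0 ?lexx //; move=> hx; move/negP: xN; apply; apply/mem_set.
apply/eqP; rewrite eq_le; apply/andP; split.
  by rewrite -e; apply: phi_mono => // x; case/andP: (hb x).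
by rewrite -e'; apply: phi_mono => // x; case/andP: (hb x).
Qed.

Definition gg (n : nat) := fun x => Num.max (Num.min (f x) n%:R) (a - 1).

Lemma gg_lb n x : a - 1 <= gg n x.
Proof. by rewrite /gg le_max lexx orbT. Qed.


Lemma gg_ub n x : gg n x <= n%:R + `|a - 1|.
Proof.
rewrite /gg ge_max; apply/andP; split.
  rewrite ge_min; apply/orP; right; have := normr_ge0 (a - 1); lra.
have := ler_norm (a - 1); have := ler0n R n; lra.
Qed.

Lemma bnd_gg n : bnd (gg n).
Proof. by apply: (bnd_bounds _ (a - 1) (n%:R + `|a - 1|)) => x; rewrite gg_lb gg_ub. Qed.


Lemma gg_mono n k : (n <= k)%N -> forall x, gg n x <= gg k x.
Proof.
move=> nk x; rewrite /gg ge_max; apply/andP; split; last by rewrite le_max lexx orbT.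
by rewrite le_max; apply/orP; left; rewrite le_min ge_min lexx /= ge_min ler_nat nk orbT.
Qed.

Lemma f_ge_gg n : ge f (gg n).
Proof.
apply: (ge_of_sub0 Hge).
have H1 := ge_rest Hge Nn (ge_sub0 Hge fa).
have H2 : ge (fun x => (f x - gg n x) - (f x - a) * \1_Nn x) (cst 0).
  apply: (ge_cert Hge) => x; rewrite indicE; case: (boolP (x \in Nn)) => xN /=.
    have fx : f x < a - 1 by move: xN; rewrite inE.
    rewrite /gg mulr1 (max_r (_ : Num.min (f x) n%:R <= a - 1)); first lra.
    by rewrite ge_min (ltW fx).
  rewrite mulr0 subr0 subr_ge0 /gg ge_max ge_min lexx /=.
  have : ~ (f x < a - 1) by move=> h; move/negP: xN; apply; apply/mem_set.
  by move=> h; rewrite leNgt; apply/negP.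
have := ge_add Hge H1 H2; move/ge_ext; apply => x //=; rewrite /GRing.mul /=; lra.
Qed.

Definition vv n := phi (gg n).

Lemma vv_le0 n : vv n <= 0.
Proof. exact: phi_G _ (bnd_gg n) (f_ge_gg n). Qed.

Lemma vv_ge n : a - 1 <= vv n.
Proof.
rewrite -(phi_cst (a - 1)); apply: phi_mono; [exact: bnd_cst|exact: bnd_gg|exact: gg_lb].
Qed.

Lemma vv_mono : {homo vv : n k / (n <= k)%N >-> n <= k}.
Proof.
move=> n k nk; apply: phi_mono; [exact: bnd_gg|exact: bnd_gg|exact: gg_mono].
Qed.

Lemma f_notN x : ~ Nn x -> a - 1 <= f x.
Proof. by move=> h; rewrite leNgt; apply/negP => h'; apply: h. Qed.

Lemma trn_gg n x : `|a| + 1 <= n%:R -> ~ Nn x -> trn n%:R (f x) = gg n x.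
Proof.
move=> hn xN; have fx := f_notN x xN.
have ha := ler_norm a; have ha' := ler_norm (- a); rewrite normrN in ha'.
rewrite trn_eq ?ler0n; [|lra|lra].
rewrite /gg max_l // le_min; apply/andP; split; lra.
Qed.

Lemma bnd_trn n : bnd (fun x => trn n%:R (f x)).
Proof.
apply: (bnd_bounds _ (- n%:R) n%:R) => x.
by rewrite trn_lb ?trn_ub ?ler0n.
Qed.

Lemma bint_trn n : `|a| + 1 <= n%:R -> bint m (fun x => trn n%:R (f x)) = vv n.
Proof.
move=> hn; rewrite (bint_phi Hge phi Hlin Hdom _ (bnd_trn n)).
have bd : bnd (fun x => trn n%:R (f x) - gg n x).
  by apply: (bnd_ext (bnd_comb 1 (-1) (bnd_trn n) (bnd_gg n))) => x; rewrite mul1r mulN1r.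
have e0 : phi (fun x => trn n%:R (f x) - gg n x) = 0.
  apply: phi_supp => // x xN; rewrite trn_gg //; lra.
have := phiAdd _ _ (bnd_gg n) bd; rewrite e0 addr0 /vv => <-.
by congr phi; apply/funext => x; lra.
Qed.

Lemma fa_int_le0 : (fa_integral m f <= 0)%E.
Proof.
have [n0 hn0] := archi (`|a| + 1).
set l := sup (range vv).
have hub : has_ubound (range vv) by exists 0; move=> _ [n _ <-]; exact: vv_le0.
have vl := nondecreasing_cvgn vv_mono hub.
have l0 : l <= 0.
  by apply: ge_sup; [exists (vv 0); exists 0%N|move=> _ [n _ <-]; exact: vv_le0].
have hv : (fun n => (vv n)%:E) @ \oo --> l%:E.
  by apply: cvg_EFin; [near=> n; done|exact: vl].
have hu : (fun n : nat => (bint m (fun x => trn n%:R (f x)))%:E) @ \oo --> l%:E.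
  apply: cvg_trans hv; apply: near_eq_cvg; exists n0 => // n /= hn.
  rewrite bint_trn //; apply: ltW; apply: lt_le_trans hn0 _; by rewrite ler_nat.
rewrite /fa_integral /= asboolT; last exact: cvgP hu.
by rewrite (cvg_lim (@ereal_hausdorff R) hu) lee_fin.
Unshelve. all: by end_near.
Qed.
Definition ss (n : nat) := disc (n.+1%:R^-1) (gg n).

Lemma dpos (n : nat) : 0 < (n.+1%:R : R)^-1.
Proof. by rewrite invr_gt0 ltr0Sn. Qed.

Lemma ss_le n x : ss n x <= gg n x.
Proof. exact: disc_le (dpos n). Qed.
Lemma ss_gt n x : gg n x - n.+1%:R^-1 < ss n x.
Proof. exact: disc_gt (dpos n). Qed.

Lemma bnd_ss n : bnd (ss n).
Proof.
apply: (bnd_bounds _ (a - 1 - n.+1%:R^-1) (n%:R + `|a - 1|)) => x.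
have := ss_le n x; have := ss_gt n x; have := gg_lb n x; have := gg_ub n x.
move=> h1 h2 h3 h4; apply/andP; split; last exact: le_trans h4 h1.
by apply: le_trans (ltW h3); rewrite lerD2r.
Qed.

Lemma bnd_norm (h : Omega -> R) : bnd h -> bnd (fun x => `|h x|).
Proof. by move=> [M hM]; exists M => x; rewrite normr_id. Qed.

Lemma m_mono (A B : set Omega) : A `<=` B -> m A <= m B.
Proof.
move=> AB; apply: phi_mono; [exact: bnd_ind|exact: bnd_ind|] => x.
rewrite !indicE; case: (boolP (x \in A)) => xA /=.
  by rewrite mem_set ?lexx //; apply: AB; apply/set_mem.
by case: (x \in B).
Qed.

Lemma m_subadd (A B : set Omega) : m (A `|` B) <= m A + m B.
Proof.
rewrite /mphi -phiAdd; [|exact: bnd_ind..].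
apply: phi_mono; [exact: bnd_ind| |] => [|x].
  by apply: (bnd_ext (bnd_comb 1 1 (bnd_ind A) (bnd_ind B))) => x; rewrite !mul1r.
rewrite !indicE in_setU; case: (x \in A); case: (x \in B) => //=; lra.
Qed.

Lemma mP_bound n : `|a| + 1 <= n%:R ->
  (n%:R - a + 1) * m [set x | n%:R < f x] <= 1 - a.
Proof.
move=> hn; set P := [set x | n%:R < f x].
have ha := ler_norm a; have ha' := ler_norm (- a); rewrite normrN in ha'.
rewrite /mphi -phiScale; last exact: bnd_ind.
have bd : bnd (fun x => gg n x - (a - 1)).
  by apply: (bnd_ext (bnd_comb 1 (-1) (bnd_gg n) (bnd_cst (a - 1)))) => x; rewrite mul1r mulN1r.
apply: (@le_trans _ _ (phi (fun x => gg n x - (a - 1)))).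
  apply: phi_mono => //.
    by apply: (bnd_ext (bnd_comb (n%:R - a + 1) 0 (bnd_ind P) (bnd_ind P))) => x; rewrite mul0r addr0.
  move=> x; rewrite indicE; case: (boolP (x \in P)) => xP /=.
    have fx : n%:R < f x by move: xP; rewrite inE.
    rewrite mulr1 /gg min_r ?(ltW fx) // max_l; lra.
  by rewrite mulr0 subr_ge0 gg_lb.
have e := phiSub _ _ (bnd_gg n) (bnd_cst (a - 1)); rewrite /= phi_cst in e.
rewrite e; have := vv_le0 n; rewrite /vv; lra.
Qed.

Lemma ss_close n x : `|a| + 1 <= n%:R -> ~ Nn x -> f x <= n%:R ->
  `|ss n x - f x| <= n.+1%:R^-1.
Proof.
move=> hn xN fn; have fx := f_notN x xN.
have eg : gg n x = f x by rewrite /gg min_l // max_l.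
have := ss_le n x; have := ss_gt n x; rewrite eg => h1 h2.
move: h1 h2; have := dpos n; move: (n.+1%:R^-1) => d d0 h1 h2.
rewrite ler_norml; apply/andP; split; lra.
Qed.

Lemma inv_lt (x : R) (n : nat) : 0 < x -> x^-1 < n%:R -> n.+1%:R^-1 < x.
Proof.
move=> x0 h; have h1 : x^-1 < n.+1%:R by rewrite -natr1; lra.
by rewrite -[x in _ < x]invrK ltf_pV2 // posrE ?invr_gt0 ?ltr0Sn.
Qed.

Lemma DS_f : DS_integrable m f.
Proof.
have [n0 hn0] := archi (`|a| + 1).
have ha := ler_norm a; have ha' := ler_norm (- a); rewrite normrN in ha'.
have a1 : a <= 1 by have := vv_ge 0; have := vv_le0 0; lra.
exists ss; split.
- by move=> n; apply: disc_simple; [exact: dpos|exact: bnd_gg].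
- move=> eps e0; apply/cvgrPdist_le => e e1.
  have [N hN] := archi (`|a| + 1 + eps^-1 + (1 - a) / e).
  exists N => // n /= Nn'.
  have hn : `|a| + 1 + eps^-1 + (1 - a) / e < n%:R.
    by apply: lt_le_trans hN _; rewrite ler_nat.
  have ie : 0 < eps^-1 by rewrite invr_gt0.
  have ie' : 0 <= (1 - a) / e by rewrite divr_ge0 //; lra.
  have hn1 : `|a| + 1 <= n%:R by lra.
  have hd : n.+1%:R^-1 < eps by apply: inv_lt => //; lra.
  set S := [set x | eps < `|ss n x - f x|].
  set P := [set x | n%:R < f x].
  have sub : S `<=` Nn `|` P.
    move=> x Sx; case: (pselect (Nn x)) => xN; [by left|right].
    rewrite /P /=; rewrite ltNge; apply/negP => fn.
    have := ss_close n x hn1 xN fn => h.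
    by have := lt_le_trans Sx (le_trans h (ltW hd)); rewrite ltxx.
  have mS0 : 0 <= m S by apply: phi_ge0; [exact: bnd_ind|move=> x; rewrite indicE ler0n].
  have mP0 : 0 <= m P by apply: phi_ge0; [exact: bnd_ind|move=> x; rewrite indicE ler0n].
  have h1 := m_mono _ _ sub; have h2 := m_subadd Nn P; rewrite mN add0r in h2.
  have hP := mP_bound n hn1; rewrite -/P in hP.
  rewrite sub0r normrN ger0_norm //.
  set c := n%:R - a + 1 in hP.
  have cpos : 0 < c by rewrite /c; lra.
  have hmP : m P <= (1 - a) / c by rewrite ler_pdivlMr // mulrC.
  have hc : (1 - a) / e < c by rewrite /c; lra.
  move: hc; rewrite ltr_pdivrMr // => hc.
  have : (1 - a) / c <= e by rewrite ler_pdivrMr // ltW // mulrC.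
  lra.
- move=> eps e0.
  set l := sup (range vv).
  have hsup : has_sup (range vv).
    split; first by exists (vv 0); exists 0%N.
    by exists 0; move=> _ [n _ <-]; exact: vv_le0.
  have e4 : 0 < eps / 4 by rewrite divr_gt0.
  have [_ [N1 _ <-] hN1] := sup_adherent e4 hsup.
  have [N2 hN2] := archi ((eps / 4)^-1).
  set N := maxn N1 N2.
  exists N => n k hn hk.
  have vl j : vv j <= l by apply: sup_upper_bound => //; exists j.
  have vN : vv N1 <= vv N by apply: vv_mono; rewrite leq_maxl.
  have dlt j : (N <= j)%N -> j.+1%:R^-1 < eps / 4.
    move=> hj; apply: inv_lt => //; apply: lt_le_trans hN2 _.
    by rewrite ler_nat; apply: leq_trans hj; rewrite leq_maxr.
  have hdn := dlt n hn; have hdk := dlt k hk.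
  have bdiff : bnd (fun x => ss n x - ss k x).
    by apply: (bnd_ext (bnd_comb 1 (-1) (bnd_ss n) (bnd_ss k))) => x; rewrite mul1r mulN1r.
  rewrite (bint_phi Hge phi Hlin Hdom _ (bnd_norm _ bdiff)).
  set H := fun x => (gg n x - gg N x) + (gg k x - gg N x).
  have bsub j : bnd (fun x => gg j x - gg N x).
    by apply: (bnd_ext (bnd_comb 1 (-1) (bnd_gg j) (bnd_gg N))) => x; rewrite mul1r mulN1r.
  have bH : bnd H by apply: (bnd_ext (bnd_comb 1 1 (bsub n) (bsub k))) => x; rewrite !mul1r.
  have pH : phi H = (vv n - vv N) + (vv k - vv N).
    rewrite /H phiAdd; try exact: bsub.
    by rewrite !phiSub //; exact: bnd_gg.
  set dn := n.+1%:R^-1 in hdn *; set dk := k.+1%:R^-1 in hdk *.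
  have bc : bnd (fun _ : Omega => dn + dk) by apply: bnd_cst.
  have pC : phi (fun x => (dn + dk) + H x) = (dn + dk) + phi H.
    by rewrite phiAdd // phi_cst.
  apply: (@le_trans _ _ (phi (fun x => (dn + dk) + H x))).
    apply: phi_mono; [exact: bnd_norm|by apply: (bnd_ext (bnd_comb 1 1 bc bH)) => x; rewrite !mul1r|].
    move=> x; rewrite /H.
    have gn : gg N x <= gg n x by apply: gg_mono.
    have gk : gg N x <= gg k x by apply: gg_mono.
    have s1 := ss_le n x; have s2 := ss_gt n x; have s3 := ss_le k x; have s4 := ss_gt k x.
    rewrite -/dn -/dk in s2 s4.
    move: s1 s2 s3 s4 gn gk; move: (ss n x) (ss k x) (gg n x) (gg k x) (gg N x) => a1' a2' b1 b2 b3.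
    move=> s1 s2 s3 s4 gn gk; rewrite ler_norml; apply/andP; split; lra.
  rewrite pC pH.
  have := vl n; have := vl k.
  rewrite -/l in hN1; clearbody dn dk l.
  lra.
Qed.
End Forward.

Theorem theorem8 (R : realType) (Omega : Type) (w : Omega)
  (ge : (Omega -> R) -> (Omega -> R) -> Prop) (G : set (Omega -> R)) :
  regular_stochastic_order ge -> convex_cone G ->
  ((~ exists f, G f /\ ge f (cst 1)) <->
   exists m : set Omega -> R, P_order ge m /\
     (Gamma_order ge G `<=` DS_integrable m) /\
     (ereal_sup [set fa_integral m f | f in Gamma_order ge G] <= 0)%E).
Proof.
move=> Hge HG; split.
- move=> Hno.
  have [phi [Hlin Hdom]] := @hahn_banach R Omega ge G Hge HG Hno.
  exists (mphi phi); split; first exact: (mphi_P Hge phi Hlin Hdom).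
  split.
  + move=> f [Gf [a fa]]; exact: (DS_f Hge phi Hlin Hdom f a Gf fa).
  + apply: ge_ereal_sup => _ [f [Gf [a fa]] <-].
    exact: (fa_int_le0 Hge phi Hlin Hdom f a Gf fa).
- move=> [m [Pm [_ Hsup]]] [f [Gf f1]].
  exact: (@backward R Omega ge G m f Hge Pm Gf f1 Hsup).
Qed.
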